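(* Let $\pi$ be a permutation of $[n]$ with run decomposition $(D^{(0)}_\pi,A^{(1)}_\pi,D^{(1)}_\pi,A^{(2)}_\pi,\ldots)$, and let $r=\mathsf{minrec}(\pi)$. Then for each $i\in[1,n]$, \[ r_i=\begin{cases}|\{j\in A^{(k)}_\pi: j>i,\ k>\ell\}| & \text{if } i\in D^{(\ell)}_\pi,\\ |\{j\in D^{(k)}_\pi: j<i,\ k\ge \ell\}| & \text{if } i\in A^{(\ell)}_\pi.\end{cases} \]
   Context: Permutations: for a permutation $\pi=\pi_1\cdots\pi_n$ of $[n]$, $\pi_i$ is an ascent top if $i=1$ or $\pi_{i-1}<\pi_i$, a descent bottom if $\pi_{i-1}>\pi_i$. The run decomposition $\mathsf{RunDec}(\pi)=(D^{(0)}_\pi,A^{(1)}_\pi,D^{(1)}_\pi,A^{(2)}_\pi,\ldots)$ consists of $D^{(0)}_\pi=\{0\}$ followed by the letter sets of the maximal factors of $\pi$ consisting alternately of ascent tops ($A$-blocks) and descent bottoms ($D$-blocks). Ferrers diagrams and graphs: a Ferrers diagram $F$ (English convention) of semiperimeter $n+1$ has rows and columns labeled by $0,\ldots,n$: the $n+1$ unit steps of its south-east boundary path, traversed from top-right to bottom-left, are labeled $0,\ldots,n$; a vertical step labels the row it bounds, a horizontal step the column it bounds (top row labeled $0$). $\mathsf{rows}(F)$, $\mathsf{cols}(F)$ are the label sets; $F$ has a cell in row $i$, column $j$ iff $i<j$. $G(F)$ has vertex set $\{0,\ldots,n\}$ with edges $\{i,j\}$ for $i\in\mathsf{rows}(F)$,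 $j\in\mathsf{cols}(F)$, $i<j$. Sandpile model on $G(F)$ with sink $0$: configurations $c\in\mathbb{N}^n$; non-sink $v$ unstable if $c_v\ge\deg(v)$; toppling sends one grain to each neighbour (grains to $0$ disappear); toppling the sink adds one grain to each neighbour of $0$. Canonical toppling of a recurrent $c$: topple the sink ($U^{(0)}_c=\{0\}$), then alternately topple simultaneously all unstable vertices in $\mathsf{cols}(F)$ ($V^{(1)}_c$), all unstable in $\mathsf{rows}(F)$ ($U^{(1)}_c$), etc., giving the ordered partition $\mathsf{CanonTop}(c)=(U^{(0)}_c,V^{(1)}_c,U^{(1)}_c,\ldots)$ of $\{0,\ldots,n\}$. EW-tableaux: $0/1$-fillings $T$ of $F$ with top row all 1s, a 0 in every other row, and no rectangle with 0s in two diagonally opposite corners and 1s in the other two; $\mathsf{EWtab}(F)$ is their set. $\phi_{TC}(T)$ is the configuration on $G(F)$ with $c_i$ = number of 1s in row $i$ ($i\in\mathsf{rows}(F)$), $c_i$ = number of 0s in column $i$ ($i\in\mathsf{cols}(F)$); it is a minimal recurrent configuration. With $\mathsf{CanonTop}(T):=\mathsf{CanonTop}(\phi_{TC}(T))=(U^{(0)}_T,V^{(1)}_T,U^{(1)}_T,\ldots)$, $\Psi(T)$ is the word $\mathsf{inc}(V^{(1)}_T)\,\mathsf{dec}(U^{(1)}_T)\,\mathsf{inc}(V^{(2)}_T)\cdots$; $\Psi$ is a (known) bijection from $\mathsf{EWtab}(F)$ onto the permutations of $[n]$ whose set of descent bottoms is $\mathsf{rows}(F)\setminus\{0\}$. For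 a permutation $\pi$ of $[n]$, let $F$ be the Ferrers diagram of semiperimeter $n+1$ with $\mathsf{rows}(F)=\{0\}\cup\{\text{descent bottoms of }\pi\}$, and define $\mathsf{minrec}(\pi):=\phi_{TC}(\Psi^{-1}(\pi))$, a configuration on $G(F)$. *)

(* Defs.v *)
From mathcomp Require Import all_boot.
Set Implicit Arguments. Unset Strict Implicit. Unset Printing Implicit Defensive.

(* A Ferrers diagram F of semiperimeter n+1 is determined by its set of row
   labels R (a subset of {0..n} containing 0); cols(F) = {0..n} \ R.      *)
Definition isrow (n : nat) (R : pred nat) (i : nat) : bool := R i && (i <= n).
Definition iscol (n : nat) (R : pred nat) (j : nat) : bool := ~~ R j && (j <= n).

Definition cell (n : nat) (R : pred nat) (i j : nat) : bool :=
  [&& isrow n R i, iscol n R j & i < j].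

Definition adj (n : nat) (R : pred nat) (u v : nat) : bool :=
  cell n R u v || cell n R v u.

Definition deg (n : nat) (R : pred nat) (v : nat) : nat :=
  count (adj n R v) (iota 0 n.+1).

(* configurations: functions nat -> nat, meaningful on the non-sink vertices
   1..n (vertex 0 is the sink). *)
Definition config := nat -> nat.

Definition topple_sink (n : nat) (R : pred nat) (c : config) : config :=
  fun v => c v + adj n R 0 v.

Definition topple_set (n : nat) (R : pred nat) (S : seq nat) (c : config)
  : config :=
  fun v => c v - (if v \in S then deg n R v else 0)
           + count (fun u => adj n R u v) S.

Definition unstable (n : nat) (R : pred nat) (cls : pred nat) (c : config)
  : seq nat :=
  [seq v <- iota 1 n | cls v && (deg n R v <= c v)].

Fixpoint canon_phases (n : nat) (R : pred nat) (fuel : nat) (c : config)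
  : seq (seq nat * seq nat) :=
  match fuel with
  | 0 => [::]
  | f.+1 =>
    let V := unstable n R (iscol n R) c in
    let c1 := topple_set n R V c in
    let U := unstable n R (isrow n R) c1 in
    let c2 := topple_set n R U c1 in
    (V, U) :: canon_phases n R f c2
  end.

(* Each nonempty phase topples a vertex and once a phase is empty all later
   ones are empty (G(F) is bipartite between rows and columns), so n+1
   phases suffice; trailing phases are empty. *)
Definition phases (n : nat) (R : pred nat) (c : config) :=
  canon_phases n R n.+1 (topple_sink n R c).

(* CanonTop(c) = (U0, V1, U1, V2, U2, ...) (possibly with trailing empty
   blocks) *)
Definition CanonTop (n : nat) (R : pred nat) (c : config) : seq (seq nat) :=
  [:: 0] :: flatten [seq [:: p.1; p.2] | p <- phases n R c].

(* A 0/1 filling of F: a function T : nat -> nat -> bool, of which only the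
   values on cells of F are relevant (true = 1, false = 0). *)
Definition filling := nat -> nat -> bool.

Definition EWtab (n : nat) (R : pred nat) (T : filling) : Prop :=
  (forall j, cell n R 0 j -> T 0 j) /\
  (forall i, isrow n R i -> 0 < i -> exists2 j, cell n R i j & ~~ T i j) /\
  (forall i1 i2 j1 j2, i1 < i2 -> j1 < j2 ->
     cell n R i1 j1 -> cell n R i1 j2 -> cell n R i2 j1 -> cell n R i2 j2 ->
     ~ ((~~ T i1 j1 && ~~ T i2 j2 && T i1 j2 && T i2 j1) ||
        (~~ T i1 j2 && ~~ T i2 j1 && T i1 j1 && T i2 j2))).

Definition phiTC (n : nat) (R : pred nat) (T : filling) : config :=
  fun i => if isrow n R i then count (fun j => cell n R i j && T i j) (iota 0 n.+1)
           else count (fun k => cell n R k i && ~~ T k i) (iota 0 n.+1).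

Definition Psi (n : nat) (R : pred nat) (T : filling) : seq nat :=
  flatten [seq sort leq p.1 ++ sort geq p.2 | p <- phases n R (phiTC n R T)].

(* a permutation of [n] is a word pi = pi_1 ... pi_n, stored as a seq nat
   (position p, 0-based, holds pi_{p+1}). *)
Definition is_perm (n : nat) (pi : seq nat) : Prop := perm_eq pi (iota 1 n).

Definition asc_pos (pi : seq nat) (p : nat) : bool :=
  (p == 0) || (nth 0 pi p.-1 < nth 0 pi p).

Definition is_dbot (pi : seq nat) (x : nat) : bool :=
  has (fun p => [&& 0 < p, nth 0 pi p < nth 0 pi p.-1 & nth 0 pi p == x])
      (iota 0 (size pi)).

Definition rowsOf (pi : seq nat) : pred nat := fun x => (x == 0) || is_dbot pi x.

(* index (1-based) of the maximal factor of constant type containing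
   position p *)
Definition factor_idx (pi : seq nat) (p : nat) : nat :=
  1 + count (fun q => asc_pos pi q != asc_pos pi q.-1) (iota 1 p).

(* RunDec(pi) = (D0, A1, D1, A2, ...): block 0 is {0}, block m >= 1 is the
   set of letters of the m-th maximal factor *)
Definition RunDec (pi : seq nat) : seq (seq nat) :=
  [:: 0] :: [seq [seq nth 0 pi p | p <- iota 0 (size pi) & factor_idx pi p == m]
             | m <- iota 1 (size pi)].

Definition Ablock (pi : seq nat) (k : nat) : seq nat :=
  if k is 0 then [::] else nth [::] (RunDec pi) (k.*2.-1).
Definition Dblock (pi : seq nat) (l : nat) : seq nat :=
  nth [::] (RunDec pi) l.*2.

(* Main.v *)
Require Import Defs.
From mathcomp Require Import all_boot.
From mathcomp Require Import zify.
Set Implicit Arguments. Unset Strict Implicit. Unset Printing Implicit Defensive.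

Lemma count_sumE (T : Type) (a : pred T) (s : seq T) :
  count a s = \sum_(x <- s) (a x : nat).
Proof. by elim: s => [|x s IH]; rewrite ?big_nil ?big_cons //= IH. Qed.

Lemma sum_eq_pointwise (s : seq nat) (f g : nat -> nat) :
  (forall x, x \in s -> g x <= f x) ->
  \sum_(x <- s) f x = \sum_(x <- s) g x -> forall x, x \in s -> f x = g x.
Proof.
elim: s => [|y s IH] H E x //.
rewrite !big_cons in E.
have Hy := H y (mem_head _ _).
have Hs : forall z, z \in s -> g z <= f z by move=> z zs; apply: H; rewrite inE zs orbT.
have L : \sum_(z <- s) g z <= \sum_(z <- s) f z.
  by rewrite big_seq_cond [X in _ <= X]big_seq_cond; apply: leq_sum => z /andP[zs _]; apply: Hs.
rewrite inE => /orP[/eqP->|xs]; first by lia.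
apply: IH => //; lia.
Qed.

Lemma count_sub (a : pred nat) (s t : seq nat) :
  uniq s -> uniq t -> {subset s <= t} ->
  count a s = count (fun x => a x && (x \in s)) t.
Proof.
move=> us ut st.
have -> : count (fun x => a x && (x \in s)) t = count a [seq x <- t | x \in s].
  by rewrite count_filter.
apply/permP/uniq_perm; rewrite ?filter_uniq //.
by move=> x; rewrite mem_filter; case xs: (x \in s) => //=; rewrite (st _ xs).
Qed.

Lemma mem_drop_uniq (s : seq nat) k u :
  uniq s -> (u \in drop k s) = (u \in s) && (k <= index u s).
Proof.
move=> us.
case us': (u \in s); last first.
  by apply/negbTE; apply: contraFN us' => /mem_drop.
have D : {in drop k s, forall x, x \notin take k s}.
  by move: us; rewrite -{1}(cat_take_drop k s) cat_uniq => /and3P[_ /hasPn D _].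
have H : (index u s < k) || (u \in drop k s).
  by have := us'; rewrite -{1}(cat_take_drop k s) mem_cat (in_take k us').
case: (ltnP (index u s) k) => h /=.
  apply/negbTE/negP => ud; have := D _ ud; by rewrite (in_take k us') h.
by move: H; rewrite ltnNge h.
Qed.

Definition Hs (ps : seq (seq nat * seq nat)) := flatten [seq p.1 ++ p.2 | p <- ps].
Definition Wd (ps : seq (seq nat * seq nat)) :=
  flatten [seq sort leq p.1 ++ sort geq p.2 | p <- ps].

Definition Inv n R (c : config) (H : seq nat) (c' : config) :=
  forall v, 0 < v <= n -> c' v + (v \in H) * deg n R v = c v + count (fun u => adj n R u v) H.

Lemma mem_unstable n R cls c' v :
  v \in unstable n R cls c' -> [/\ 0 < v <= n, cls v & deg n R v <= c' v].
Proof. by rewrite mem_filter mem_iota => /andP[/andP[-> ->]]; rewrite add1n ltnS. Qed.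

Lemma inv_step n R c H c' S :
  Inv n R c H c' -> uniq (H ++ S) ->
  (forall v, v \in S -> 0 < v <= n /\ deg n R v <= c' v) ->
  Inv n R c (H ++ S) (topple_set n R S c').
Proof.
move=> I U HS v vn; rewrite /topple_set count_cat mem_cat.
have := I v vn.
case vS: (v \in S).
  have [_ dl] := HS v vS.
  have vH : v \in H = false.
    by apply/negbTE; move: U; rewrite cat_uniq => /and3P[_ /hasPn /(_ v vS) ? _].
  rewrite vH /= mul0n addn0 => E.
  by rewrite mul1n -addnA [_ + deg _ _ _]addnC addnA subnK // E addnA.
rewrite orbF subn0 => E.
by rewrite -addnA [count _ S + _]addnC addnA E addnA.
Qed.

Lemma perm_Wd ps : perm_eq (Wd ps) (Hs ps).
Proof.
elim: ps => [|p ps IH] //=.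
rewrite /Wd /Hs /= -/(Wd ps) -/(Hs ps).
by rewrite -catA -catA; apply: perm_cat; rewrite ?perm_sort //; apply: perm_cat; rewrite ?perm_sort.
Qed.

Lemma take_index_cat (A B : seq nat) v :
  v \notin A -> take (index v (A ++ B)) (A ++ B) = A ++ take (index v B) B.
Proof.
move=> vA; rewrite index_cat (negbTE vA) take_cat ltnNge leq_addr /=.
by rewrite addKn.
Qed.

Lemma count_sort (a : pred nat) leT (s : seq nat) : count a (sort leT s) = count a s.
Proof. by apply/permP; rewrite perm_sort. Qed.

Lemma uniq_prefix (s t : seq nat) : uniq (s ++ t) -> uniq s.
Proof. by rewrite cat_uniq => /and3P[]. Qed.

Lemma key n R c fuel : forall H c', Inv n R c H c' ->
  uniq (H ++ Hs (canon_phases n R fuel c')) ->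
  forall v, v \in Hs (canon_phases n R fuel c') ->
  deg n R v <= c v + count (fun u => adj n R u v) H +
     count (fun u => adj n R u v)
       (take (index v (Wd (canon_phases n R fuel c'))) (Wd (canon_phases n R fuel c'))).
Proof.
elim: fuel => [|f IH] H c' I U v; first by [].
set V := unstable n R (iscol n R) c'.
set c1 := topple_set n R V c'.
set Us := unstable n R (isrow n R) c1.
set c2 := topple_set n R Us c1.
rewrite /Hs /Wd /= -/(Hs _) -/(Wd _) -/c2.
move: U; rewrite /Hs /= -/(Hs _) -/c2 => U.
move: U; rewrite -!catA => U.
have UV : uniq (H ++ V) by move: U; rewrite catA cat_uniq => /and3P[].
have UVU : uniq (H ++ V ++ Us) by move: U; rewrite (catA V) catA cat_uniq => /and3P[].
have I1 : Inv n R c (H ++ V) c1.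
  by apply: inv_step => // w /mem_unstable[]. 
have I2 : Inv n R c (H ++ V ++ Us) c2.
  by rewrite catA; apply: inv_step => //; [rewrite -catA | move=> w /mem_unstable[]].
rewrite !mem_cat => /orP[vV|/orP[vU|vr]].
- have [vn _ dl] := mem_unstable vV.
  have vH : v \in H = false.
    by apply/negbTE; move: UV; rewrite cat_uniq => /and3P[_ /hasPn /(_ v vV) ? _].
  have := I v vn; rewrite vH /= => E. lia.
- have [vn _ dl] := mem_unstable vU.
  have {}dl : deg n R v <= c1 v := dl.
  have vH : v \in H ++ V = false.
    by apply/negbTE; move: UVU; rewrite catA cat_uniq => /and3P[_ /hasPn /(_ v vU) ? _].
  have := I1 v vn; rewrite vH /= count_cat => E.
  rewrite take_index_cat ?mem_sort; last by move: vH; rewrite mem_cat => /norP[].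
  rewrite count_cat count_sort. rewrite -/V -/c1 -/Us. lia.
- have vH : v \in H ++ V ++ Us = false.
    by apply/negbTE; move: U; rewrite catA catA cat_uniq => /and3P[_ /hasPn /(_ v vr) + _]; rewrite -!catA.
  have := IH _ _ I2 _ v vr.
  rewrite take_index_cat ?mem_sort; last by move: vH; rewrite !mem_cat => /norP[_ /norP[]].
  rewrite take_index_cat ?mem_sort; last by move: vH; rewrite !mem_cat => /norP[_ /norP[]].
  rewrite !count_cat !count_sort.
  move=> L; have := L ltac:(by rewrite -!catA); rewrite -/V -/c1 -/Us. lia.
Qed.

Lemma fi_succ pi p :
  factor_idx pi p.+1 = factor_idx pi p + (asc_pos pi p.+1 != asc_pos pi p).
Proof.
rewrite /factor_idx.
have -> : iota 1 p.+1 = iota 1 p ++ [:: p.+1] by have := iotaD 1 p 1; rewrite addn1 add1n.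
by rewrite count_cat /= addn0 addnA.
Qed.

Lemma fi_odd pi p : odd (factor_idx pi p) = asc_pos pi p.
Proof.
elim: p => [|p IH]; first by rewrite /factor_idx /asc_pos.
rewrite fi_succ oddD IH oddb.
by case: (asc_pos pi p); case: (asc_pos pi p.+1).
Qed.

Lemma fi_monoD pi p d : factor_idx pi p <= factor_idx pi (p + d).
Proof.
elim: d => [|d IH]; first by rewrite addn0.
by rewrite addnS fi_succ (leq_trans IH) // leq_addr.
Qed.

Lemma fi_mono pi p q : p <= q -> factor_idx pi p <= factor_idx pi q.
Proof. by move=> pq; rewrite -(subnKC pq) fi_monoD. Qed.

Lemma fi_le pi p : factor_idx pi p <= p.+1.
Proof.
elim: p => [|p IH]; first by rewrite /factor_idx.
rewrite fi_succ; case: (_ != _); lia.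
Qed.

Lemma fi_pos pi p : 0 < factor_idx pi p.
Proof. by rewrite /factor_idx. Qed.

Lemma RunDec_mem pi m x : uniq pi -> 0 < m ->
  (x \in nth [::] (RunDec pi) m) = (x \in pi) && (factor_idx pi (index x pi) == m).
Proof.
move=> upi; case: m => [|m] // _ /=.
case: (ltnP m (size pi)) => hm.
  rewrite (nth_map 0) ?size_iota // nth_iota // add1n.
  apply/idP/idP.
    case/mapP => p; rewrite mem_filter mem_iota => /andP[/eqP fp /andP[_ pN]] ->.
    by rewrite mem_nth //= index_uniq // fp eqxx.
  case/andP => xpi /eqP fx; apply/mapP; exists (index x pi); last by rewrite nth_index.
  by rewrite mem_filter mem_iota fx eqxx /= index_mem xpi.
rewrite nth_default ?size_map ?size_iota // in_nil.
case xpi: (x \in pi) => //=.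
have := fi_le pi (index x pi); have := index_mem x pi; rewrite xpi.
move=> h1 h2; apply/esym/eqP; lia.
Qed.

Lemma dbot_asc pi x : uniq pi -> x \in pi ->
  is_dbot pi x = ~~ asc_pos pi (index x pi).
Proof.
move=> upi xpi; rewrite /is_dbot /asc_pos.
apply/hasP/idP.
  case=> p; rewrite mem_iota add0n => /andP[_ pN] /and3P[p0 lt /eqP e].
  subst x; rewrite index_uniq // negb_or -lt0n p0 /= -leqNgt ltnW //.
rewrite negb_or -lt0n -leqNgt => /andP[p0 le].
exists (index x pi); first by rewrite mem_iota add0n /= index_mem.
rewrite p0 nth_index // eqxx andbT /=.
rewrite (nth_index 0 xpi) in le.
rewrite ltn_neqAle le andbT.
have ix := index_mem x pi; rewrite xpi in ix.
rewrite -{1}(nth_index 0 xpi) nth_uniq //; lia.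
Qed.

Lemma adj_sym n R u v : adj n R u v = adj n R v u.
Proof. by rewrite /adj orbC. Qed.

Lemma adj_nat n R u v : (adj n R u v : nat) = cell n R u v + cell n R v u.
Proof.
rewrite /adj /cell.
case: (ltngtP u v) => h; rewrite ?andbF ?andbT ?orbF ?addn0 //=.
Qed.

Lemma cell_irr n R v : cell n R v v = false.
Proof. by rewrite /cell ltnn !andbF. Qed.

Lemma sum_drop n R (s : seq nat) : uniq s ->
  \sum_(v <- s) count (fun u => adj n R u v) (drop (index v s).+1 s) =
  \sum_(a <- s) \sum_(b <- s) (cell n R a b : nat).
Proof.
elim: s => [|x s IH]; first by rewrite !big_nil.
rewrite /= => /andP[xs us].
rewrite !big_cons /= eqxx drop0 cell_irr add0n.
rewrite (eq_big_seq (fun v => count (fun u => adj n R u v) (drop (index v s).+1 s))); last first.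
  move=> v vs /=; have : x != v by apply: contraNneq xs => ->.
  by rewrite eq_sym => /negbTE ->.
rewrite IH // count_sumE.
rewrite [X in _ = _ + X](eq_bigr (fun a => cell n R a x + \sum_(b <- s) (cell n R a b : nat))); last first.
  by move=> a _; rewrite big_cons.
rewrite big_split /= [X in X + _ = _](eq_bigr (fun u => cell n R u x + cell n R x u)); last first.
  by move=> u _; rewrite adj_nat.
rewrite big_split /=; lia.
Qed.

Lemma phiTC_split n R (T : filling) v :
  phiTC n R T v = \sum_(u <- iota 0 n.+1)
     ((cell n R v u && T v u : nat) + (cell n R u v && ~~ T u v : nat)).
Proof.
rewrite /phiTC big_split /= -!count_sumE.
case rv: (isrow n R v).
  suff -> : count (fun u => cell n R u v && ~~ T u v) (iota 0 n.+1) = 0 by rewrite addn0.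
  apply/eqP; rewrite eqn0Ngt -has_count; apply/hasPn => u _.
  by move: rv; rewrite /cell /isrow /iscol => /andP[-> _]; rewrite !andbF.
suff -> : count (fun u => cell n R v u && T v u) (iota 0 n.+1) = 0 by [].
apply/eqP; rewrite eqn0Ngt -has_count; apply/hasPn => u _.
by rewrite /cell rv.
Qed.

Lemma phiTC_sum n R (T : filling) : (forall j, cell n R 0 j -> T 0 j) ->
  \sum_(v <- iota 1 n) phiTC n R T v =
  \sum_(a <- iota 1 n) \sum_(b <- iota 1 n) (cell n R a b : nat).
Proof.
move=> top.
rewrite (eq_bigr (fun v => \sum_(u <- iota 1 n)
     ((cell n R v u && T v u : nat) + (cell n R u v && ~~ T u v : nat)))); last first.
  move=> v _; rewrite phiTC_split /= big_cons.
  have -> : cell n R v 0 = false by rewrite /cell ltn0 !andbF.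
  case c0: (cell n R 0 v); last by [].
  by rewrite top.
rewrite (eq_bigr (fun v => \sum_(u <- iota 1 n) (cell n R v u && T v u : nat) +
   \sum_(u <- iota 1 n) (cell n R u v && ~~ T u v : nat))); last by move=> v _; rewrite big_split.
rewrite big_split /= [X in _ + X](exchange_big) /= -big_split /=.
apply: eq_bigr => a _; rewrite -big_split /=; apply: eq_bigr => b _.
by case: (cell n R a b); case: (T a b).
Qed.

Lemma odd_dm1 k : 0 < k -> odd (k.*2.-1).
Proof. by case: k => // k _; rewrite doubleS /= odd_double. Qed.

Lemma odd_form m : odd m -> m = ((m./2).+1).*2.-1.
Proof. by move=> om; rewrite doubleS /= -{1}(odd_double_half m) om add1n. Qed.

Lemma even_form m : ~~ odd m -> m = (m./2).*2.
Proof. by move=> om; rewrite -{1}(odd_double_half m) (negbTE om) add0n. Qed.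

Lemma Ablock_mem pi k j : uniq pi ->
  (j \in Ablock pi k) = (0 < k) && (j \in pi) && (factor_idx pi (index j pi) == k.*2.-1).
Proof.
move=> upi; case: k => [|k] //.
by rewrite /Ablock RunDec_mem ?doubleS.
Qed.

Lemma Dblock_mem pi k j : uniq pi -> 0 < k ->
  (j \in Dblock pi k) = (j \in pi) && (factor_idx pi (index j pi) == k.*2).
Proof.
move=> upi k0; rewrite /Dblock RunDec_mem //; case: k k0 => // k _; by rewrite doubleS.
Qed.

Lemma order_fi pi x y : x \in pi -> y \in pi ->
  asc_pos pi (index x pi) != asc_pos pi (index y pi) ->
  index x pi < index y pi -> factor_idx pi (index x pi) < factor_idx pi (index y pi).
Proof.
move=> _ _ ty lt; rewrite ltn_neqAle fi_mono ?(ltnW lt) // andbT.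
apply: contraNneq ty => e; by rewrite -(fi_odd pi (index x pi)) -(fi_odd pi (index y pi)) e.
Qed.

Unset Implicit Arguments.
Theorem lemma5p6 (n : nat) (pi : seq nat) (T : filling) :
  is_perm n pi ->
  EWtab n (rowsOf pi) T ->
  Psi n (rowsOf pi) T = pi ->
  forall i, 1 <= i <= n -> forall l : nat,
    (i \in Dblock pi l ->
       phiTC n (rowsOf pi) T i =
       count (fun j => (i < j) &&
                has (fun k => (l < k) && (j \in Ablock pi k)) (iota 0 n.+1))
             (iota 0 n.+1)) /\
    (i \in Ablock pi l ->
       phiTC n (rowsOf pi) T i =
       count (fun j => (j < i) &&
                has (fun k => (l <= k) && (j \in Dblock pi k)) (iota 0 n.+1))
             (iota 0 n.+1)).
Proof.
move=> perm [top _] psi.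
have upi : uniq pi by rewrite (perm_uniq perm) iota_uniq.
have mpi : forall x, (x \in pi) = (0 < x <= n).
  by move=> x; rewrite (perm_mem perm) mem_iota add1n ltnS.
have spi : size pi = n by rewrite (perm_size perm) size_iota.
have W : Wd (phases n (rowsOf pi) (phiTC n (rowsOf pi) T)) = pi := psi.
have PH : perm_eq pi (Hs (phases n (rowsOf pi) (phiTC n (rowsOf pi) T))).
  by rewrite -{1}W perm_Wd.
have U0 : uniq ([:: 0] ++ Hs (phases n (rowsOf pi) (phiTC n (rowsOf pi) T))).
  by rewrite /= -(perm_mem PH) mpi ltnn /= -(perm_uniq PH).
have I0 : Inv n (rowsOf pi) (phiTC n (rowsOf pi) T) [:: 0]
            (topple_sink n (rowsOf pi) (phiTC n (rowsOf pi) T)).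
  move=> v /andP[v0 _]; rewrite /topple_sink inE (gtn_eqF v0) /= mul0n !addn0.
  by rewrite adj_sym.
have K := key I0 U0.
rewrite -/(phases _ _ _) W in K.
have Ge : forall v, v \in pi ->
    count (fun u => adj n (rowsOf pi) u v) (drop (index v pi).+1 pi) <= phiTC n (rowsOf pi) T v.
  move=> v vpi.
  have := K v; rewrite -(perm_mem PH) => /(_ vpi).
  have -> : deg n (rowsOf pi) v = count (fun u => adj n (rowsOf pi) u v) (iota 0 n.+1).
    by rewrite /deg; apply: eq_count => u; rewrite adj_sym.
  have E1 : count (fun u => adj n (rowsOf pi) u v) pi =
     count (fun u => adj n (rowsOf pi) u v) (take (index v pi) pi) +
     count (fun u => adj n (rowsOf pi) u v) (drop (index v pi).+1 pi).
    rewrite -[X in count _ X = _](cat_take_drop (index v pi) pi) count_cat (drop_nth 0) ?index_mem //.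
    by rewrite nth_index //= /adj cell_irr.
  have E2 : count (fun u => adj n (rowsOf pi) u v) (iota 0 n.+1) =
     adj n (rowsOf pi) 0 v + count (fun u => adj n (rowsOf pi) u v) pi.
    by rewrite (permP perm).
  rewrite E2 E1 /= addn0; lia.
have Sum : \sum_(v <- pi) phiTC n (rowsOf pi) T v =
    \sum_(v <- pi) count (fun u => adj n (rowsOf pi) u v) (drop (index v pi).+1 pi).
  rewrite sum_drop // (perm_big _ perm) phiTC_sum // [RHS](perm_big _ perm).
  by apply: eq_bigr => a _; rewrite [RHS](perm_big _ perm).
have Eq := sum_eq_pointwise Ge Sum.
have ty_row : forall x, x \in pi -> isrow n (rowsOf pi) x = ~~ asc_pos pi (index x pi).
  move=> x xpi; rewrite /isrow /rowsOf -dbot_asc //.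
  have := xpi; rewrite mpi => /andP[x0 xn]; by rewrite (gtn_eqF x0) xn andbT.
have ty_col : forall x, x \in pi -> iscol n (rowsOf pi) x = asc_pos pi (index x pi).
  move=> x xpi; rewrite /iscol /rowsOf -[asc_pos _ _]negbK -dbot_asc //.
  have := xpi; rewrite mpi => /andP[x0 xn]; by rewrite (gtn_eqF x0) xn andbT.
have fi_n : forall x, x \in pi -> factor_idx pi (index x pi) <= n.
  move=> x xpi; have := fi_le pi (index x pi); have := index_mem x pi.
  rewrite xpi spi; lia.
move=> i irange l.
have ipi : i \in pi by rewrite mpi.
rewrite (Eq i ipi) (count_sub _ (drop_uniq _ upi) (iota_uniq 0 n.+1)); last first.
  move=> u /mem_drop; rewrite mpi mem_iota => /andP[_ h]; lia.
have Ed : forall j, (j \in drop (index i pi).+1 pi) = (j \in pi) && (index i pi < index j pi).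
  by move=> j; rewrite mem_drop_uniq.
split.
- case: l => [|l] iD.
    by move: iD; rewrite /Dblock /= inE => /eqP i0; move: irange; rewrite i0.
  rewrite Dblock_mem // in iD; case/andP: iD => _ /eqP fi.
  have tyi : asc_pos pi (index i pi) = false by rewrite -fi_odd fi odd_double.
  apply: eq_count => j; rewrite Ed.
  case jpi: (j \in pi); last first.
    rewrite andbF; apply/esym/negbTE/nandP; right; apply/hasPn => k _.
    by rewrite Ablock_mem // jpi !(andbF, andFb).
  rewrite andTb; apply/idP/idP.
  + case/andP => ajd lt.
    have cij : cell n (rowsOf pi) i j.
      move: ajd; rewrite /adj => /orP[|//].
      by rewrite /cell (ty_col i ipi) tyi /= andbF.
    have tyj : asc_pos pi (index j pi) = true.
      by move: cij => /and3P[_ cj _]; rewrite ty_col in cj.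
    have ij : i < j by move: cij => /and3P[_ _ ->].
    have flt := order_fi ipi jpi (ltac:(by rewrite tyi tyj)) lt.
    have od : odd (factor_idx pi (index j pi)) by rewrite fi_odd tyj.
    have e := odd_form od.
    have fjn := fi_n j jpi.
    rewrite ij /=; apply/hasP; exists ((factor_idx pi (index j pi))./2).+1.
      rewrite mem_iota; lia.
    rewrite Ablock_mem // jpi andbT -e eqxx andbT; lia.
  + case/andP => ij /hasP[k _ /andP[lk]]; rewrite Ablock_mem // jpi andbT => /andP[k0 /eqP fj].
    have tyj : asc_pos pi (index j pi) = true by rewrite -fi_odd fj odd_dm1.
    apply/andP; split.
      by rewrite /adj /cell (ty_row j jpi) (ty_col i ipi) (ty_row i ipi) (ty_col j jpi) tyi tyj ij.
    rewrite ltnNge; apply/negP => h; have := fi_mono pi h; rewrite fi fj; lia.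
- move=> iA; rewrite Ablock_mem // in iA; case/andP: iA => /andP[l0 _] /eqP fi.
  have tyi : asc_pos pi (index i pi) = true by rewrite -fi_odd fi odd_dm1.
  apply: eq_count => j; rewrite Ed.
  case jpi: (j \in pi); last first.
    rewrite andbF; apply/esym/negbTE/nandP; right; apply/hasPn => k _.
    case: k => [|k]; first by rewrite leqn0 (gtn_eqF l0).
    by rewrite Dblock_mem // jpi !(andbF, andFb).
  rewrite andTb; apply/idP/idP.
  + case/andP => ajd lt.
    have cji : cell n (rowsOf pi) j i.
      move: ajd; rewrite /adj => /orP[//|].
      by rewrite /cell (ty_row i ipi) tyi.
    have tyj : asc_pos pi (index j pi) = false.
      by move: cji => /and3P[rj _ _]; rewrite ty_row in rj; [apply/negbTE|].
    have ji : j < i by move: cji => /and3P[_ _ ->].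
    have flt := order_fi ipi jpi (ltac:(by rewrite tyi tyj)) lt.
    have od : ~~ odd (factor_idx pi (index j pi)) by rewrite fi_odd tyj.
    have e := even_form od.
    have fjn := fi_n j jpi.
    rewrite ji andTb; apply/hasP; exists ((factor_idx pi (index j pi))./2).
      rewrite mem_iota; lia.
    have kp : 0 < (factor_idx pi (index j pi))./2 by lia.
    rewrite Dblock_mem // jpi -e eqxx andbT; lia.
  + case/andP => ji /hasP[k _ /andP[lk]].
    case: k lk => [|k] lk; first by move: lk; rewrite leqn0 (gtn_eqF l0).
    rewrite Dblock_mem // jpi andTb => /eqP fj.
    have tyj : asc_pos pi (index j pi) = false by rewrite -fi_odd fj odd_double.
    apply/andP; split.
      by rewrite /adj /cell (ty_row j jpi) (ty_col i ipi) (ty_row i ipi) (ty_col j jpi) tyi tyj ji.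
    rewrite ltnNge; apply/negP => h; have := fi_mono pi h; rewrite fi fj; lia.
Qed.
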